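(* Let $C$ be an ordered field. The theory $T_{\mathrm{Ham}}$ of independent dense Hamel spaces over $C$ is not strongly dependent. Consequently it is not dp-minimal and does not have finite dp-rank.
   Context: Let $C$ be an ordered field. A $2$-ordered $C$-vector space is a $C$-vector space $G$ with two total orderings $<_0,<_1$ such that $G$ is an ordered $C$-vector space with respect to each of them. Put $G_\infty=G\cup\{\infty\}$, with $G<_0\infty$ and $G<_1\infty$. A Hamel valuation on $G$ is a map $v:G\to G_\infty$ such that for all $x,y\in G$ and $\lambda\in C^{\times}$: $v(x)=\infty$ iff $x=0$; $v(x+y)\ge_0\min_0(v(x),v(y))$; $v(\lambda x)=v(x)$; if $0<_1x<_1y$ then $v(x)\ge_0 v(y)$; $v(v(x))=v(x)$ (with $v(\infty)=\infty$); and $v(x)>_1 0$. A Hamel space over $C$ is such a pair $(G,v)$. It is independent if for all $a_0,b_0,a_1,b_1\in G\cup\{\pm\infty\}$ with $a_0<_0b_0$ and $a_1<_1b_1$ there is $z\in G$ with $a_0<_0z<_0b_0$ and $a_1<_1z<_1b_1$; it is dense if for all $a<_0b$ in $G$ there is $c\in G$ with $a<_0v(c)<_0b$. The language is $\mathcal{L}_{\mathrm{Ham}}=\{0,+,(\lambda_c)_{c\in C},<_0,<_1,v,\infty\}$, a Hamel space being viewed as a structure with universe $G_\infty$, where $\lambda_c$ is scalar multiplication by $c$, and $g+\infty=\infty+g=\infty+\infty=\lambda_c(\infty)=v(\infty)=\infty$. $T_{\mathrm{Ham}}$ is the $\mathcal{L}_{\mathrm{Ham}}$-theory whose models are exactly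 the independent dense Hamel spaces over $C$ (it is complete). Strongly dependent, dp-minimal and finite dp-rank are the standard notions for NIP theories. *)

(* Defs.v *)
From HB Require Import structures.
From mathcomp Require Import all_boot all_order all_algebra.
Set Implicit Arguments. Unset Strict Implicit. Unset Printing Implicit Defensive.
Import Order.TTheory GRing.Theory Num.Theory.
Local Open Scope ring_scope.

(* G_infty = option G, with None playing the role of infinity.        *)

Section Hamel.
Variable C : realFieldType.
Variable G : lmodType C.

Definition ltinf (lt : rel G) (a b : option G) : bool :=
  match a, b with
  | Some x, Some y => lt x y
  | Some _, None => true
  | None, _ => false
  end.

Definition leinf (lt : rel G) (a b : option G) : bool := ltinf lt a b || (a == b).

Definition mininf (lt : rel G) (a b : option G) : option G :=
  if ltinf lt a b then a else b.

Definition vinf (v : G -> option G) (a : option G) : option G :=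
  match a with Some x => v x | None => None end.

Definition ordered_vspace (lt : rel G) : Prop :=
  [/\ (forall x, ~~ lt x x),
      (forall x y z, lt x y -> lt y z -> lt x z),
      (forall x y, [|| lt x y, x == y | lt y x]),
      (forall x y z, lt x y -> lt (x + z) (y + z))
    & (forall (c : C) x y, 0 < c -> lt x y -> lt (c *: x) (c *: y))].

Definition two_ordered_vspace (lt0 lt1 : rel G) : Prop :=
  ordered_vspace lt0 /\ ordered_vspace lt1.

Definition hamel_valuation (lt0 lt1 : rel G) (v : G -> option G) : Prop :=
  (forall x, v x = None <-> x = 0) /\
  (forall x y, leinf lt0 (mininf lt0 (v x) (v y)) (v (x + y))) /\
  (forall (c : C) x, c != 0 -> v (c *: x) = v x) /\
  (forall x y, lt1 0 x -> lt1 x y -> leinf lt0 (v y) (v x)) /\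
  (forall x, vinf v (v x) = v x) /\
  (forall x, ltinf lt1 (Some 0) (v x)).

Definition hamel_space (lt0 lt1 : rel G) (v : G -> option G) : Prop :=
  two_ordered_vspace lt0 lt1 /\ hamel_valuation lt0 lt1 v.

Inductive ext := NInf | Fin of G | PInf.

Definition ltext (lt : rel G) (a b : ext) : bool :=
  match a, b with
  | NInf, NInf => false
  | NInf, _ => true
  | Fin x, Fin y => lt x y
  | Fin _, PInf => true
  | Fin _, NInf => false
  | PInf, _ => false
  end.

Definition independent (lt0 lt1 : rel G) : Prop :=
  forall a0 b0 a1 b1 : ext, ltext lt0 a0 b0 -> ltext lt1 a1 b1 ->
    exists z : G, [/\ ltext lt0 a0 (Fin z), ltext lt0 (Fin z) b0,
                      ltext lt1 a1 (Fin z) & ltext lt1 (Fin z) b1].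

Definition dense (lt0 : rel G) (v : G -> option G) : Prop :=
  forall a b : G, lt0 a b ->
    exists c : G, ltinf lt0 (Some a) (v c) && ltinf lt0 (v c) (Some b).

Definition indep_dense_hamel (lt0 lt1 : rel G) (v : G -> option G) : Prop :=
  [/\ hamel_space lt0 lt1 v, independent lt0 lt1 & dense lt0 v].

End Hamel.

Inductive term (C : Type) :=
  | TVar of nat
  | TZero
  | TInf
  | TAdd of term C & term C
  | TScal of C & term C
  | TVal of term C.

Inductive formula (C : Type) :=
  | FEq of term C & term C
  | FLt0 of term C & term C
  | FLt1 of term C & term C
  | FNot of formula C
  | FAnd of formula C & formula C
  | FEx of nat & formula C.

Section Semantics.
Variable C : realFieldType.
Variable G : lmodType C.
Variables (lt0 lt1 : rel G) (v : G -> option G).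

Definition env := nat -> option G.

Fixpoint teval (e : env) (t : term C) : option G :=
  match t with
  | TVar i => e i
  | TZero => Some 0
  | TInf => None
  | TAdd t u =>
      match teval e t, teval e u with
      | Some x, Some y => Some (x + y)
      | _, _ => None
      end
  | TScal c t =>
      match teval e t with Some x => Some (c *: x) | None => None end
  | TVal t => vinf v (teval e t)
  end.

Definition upd (e : env) (i : nat) (d : option G) : env :=
  fun m => if m == i then d else e m.

Fixpoint sat (e : env) (phi : formula C) : Prop :=
  match phi with
  | FEq t u => teval e t = teval e u
  | FLt0 t u => ltinf lt0 (teval e t) (teval e u)
  | FLt1 t u => ltinf lt1 (teval e t) (teval e u)
  | FNot p => ~ sat e p
  | FAnd p q => sat e p /\ sat e q
  | FEx i p => exists d : option G, sat (upd e i d) p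
  end.

(* assignment: variables 0..n-1 are the object variables x, variables
   n, n+1, ... are the parameter variables y, read from p *)
Definition combine (n : nat) (b p : env) : env :=
  fun m => if (m < n)%N then b m else p (m - n)%N.

(* An ict-pattern in x = (x_0,...,x_{n-1}) whose rows are the i with
   rows i, given by formulas phi i (x; y) and parameters a i j, which is
   consistent with the elementary diagram of the structure, i.e. for
   every path eta, the type
     { phi_i(x, a_{i,eta i}) } u { ~ phi_i(x, a_{i,j}) : j <> eta i }
   (i ranging over rows) is finitely satisfiable in the structure. *)
Definition ict_pattern (n : nat) (rows : pred nat)
    (phi : nat -> formula C) (a : nat -> nat -> env) : Prop :=
  forall (eta : nat -> nat) (N : nat), exists b : env,
    forall i, (i < N)%N -> rows i ->
      sat (combine n b (a i (eta i))) (phi i) /\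
      (forall j, (j < N)%N -> j <> eta i -> ~ sat (combine n b (a i j)) (phi i)).

End Semantics.

Definition THam_has_ict (C : realFieldType) (n : nat) (rows : pred nat) : Prop :=
  exists (G : lmodType C) (lt0 lt1 : rel G) (v : G -> option G),
    indep_dense_hamel lt0 lt1 v /\
    exists (phi : nat -> formula C) (a : nat -> nat -> env G),
      ict_pattern lt0 lt1 v n rows phi a.

Definition THam_strongly_dependent (C : realFieldType) : Prop :=
  forall n, ~ THam_has_ict C n (fun _ => true).

Definition THam_dp_minimal (C : realFieldType) : Prop :=
  ~ THam_has_ict C 1 (fun i => (i < 2)%N).

Definition THam_finite_dp_rank (C : realFieldType) : Prop :=
  exists k, ~ THam_has_ict C 1 (fun i => (i < k)%N).

(* Main.v *)
Require Import Defs.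
From HB Require Import structures.
From mathcomp Require Import all_boot all_order all_algebra.
From mathcomp Require Import finmap monalg.
From mathcomp Require Import ring lra.
Set Implicit Arguments. Unset Strict Implicit. Unset Printing Implicit Defensive.
Import Order.TTheory GRing.Theory Num.Theory.
Import Order.DefaultProdLexiOrder Order.DefaultSeqLexiOrder.
Local Open Scope ring_scope.
Definition sto (T : eqType) (r : rel T) : Prop :=
  [/\ (forall x, ~~ r x x), (forall x y z, r x y -> r y z -> r x z) &
      (forall x y, x != y -> r x y || r y x)].

Section Lex.
Variables (C : realFieldType) (T : choiceType) (r : rel T) (t0 : T).
Hypothesis Hr : sto r.
Let r_irr : forall x, ~~ r x x. Proof. by case: Hr. Qed.
Let r_trans : forall x y z, r x y -> r y z -> r x z. Proof. by case: Hr. Qed.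
Let r_tot : forall x y, x != y -> r x y || r y x. Proof. by case: Hr. Qed.

Definition minr (a b : T) := if r a b then a else b.
Definition leads (s : seq T) := if s is a :: s' then foldr minr a s' else t0.
Definition lead (z : {malg C[T]}) := leads (enum_fset (msupp z)).

Lemma leads_spec a s : leads (a :: s) \in a :: s /\
  forall t, t \in a :: s -> t != leads (a :: s) -> r (leads (a :: s)) t.
Proof.
rewrite /=; elim: s => [|b s [IH1 IH2]] /=.
  by split; [rewrite inE eqxx | move=> t; rewrite inE => ->].
rewrite /minr; case: ifP => rb.
  split; first by rewrite !inE eqxx orbT.
  move=> t; rewrite !inE => /or3P[/eqP->|/eqP->|ts] tb.
  - have [->|ne] := eqVneq a (foldr minr a s); first by rewrite rb.
    by apply: r_trans rb (IH2 a _ ne); rewrite inE eqxx.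
  - by rewrite eqxx in tb.
  - have [->|ne] := eqVneq t (foldr minr a s); first by rewrite rb.
    by apply: r_trans rb (IH2 t _ ne); rewrite inE ts orbT.
split.
  by move: IH1; rewrite !inE => /orP[->|->]; rewrite ?orbT.
move=> t; rewrite !inE => /or3P[/eqP->|/eqP->|ts] tb.
- by apply: IH2 => //; rewrite inE eqxx.
- by have := r_tot tb; rewrite rb.
- by apply: IH2 => //; rewrite inE ts orbT.
Qed.

Lemma msupp_eq0' (z : {malg C[T]}) : enum_fset (msupp z) = [::] -> z = 0.
Proof.
move=> E; apply/malgP => k; rewrite mcoeff0 mcoeff_outdom //.
by rewrite -[k \in msupp z]/(k \in enum_fset (msupp z)) E.
Qed.

Lemma lead_spec z : z != 0 -> lead z \in msupp z /\
  forall t, t \in msupp z -> t != lead z -> r (lead z) t.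
Proof.
move=> nz; rewrite /lead.
case E: (enum_fset (msupp z)) => [|a s].
  by rewrite (msupp_eq0' E) eqxx in nz.
have [H1 H2] := leads_spec a s.
split; first by rewrite -[_ \in msupp z]/(_ \in enum_fset (msupp z)) E.
by move=> t tz; apply: H2; rewrite -E.
Qed.

Lemma lead_charac z g : z@_g != 0 -> (forall t, r t g -> z@_t = 0) -> lead z = g.
Proof.
move=> zg H.
have nz : z != 0 by apply: contraNneq zg => ->; rewrite mcoeff0.
have [L1 L2] := lead_spec nz.
apply/eqP; apply/negPn/negP => ne.
have := L2 g; rewrite -mcoeff_neq0 zg eq_sym => /(_ isT ne) /H.
by move/eqP; rewrite mcoeff_eq0 L1.
Qed.

Definition pos (z : {malg C[T]}) := (z != 0) && (0 < z@_(lead z)).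

Lemma posP z : reflect (exists g, 0 < z@_g /\ forall t, r t g -> z@_t = 0) (pos z).
Proof.
apply: (iffP andP) => [[nz lz]|[g [zg H]]].
  exists (lead z); split => // t rt.
  have [L1 L2] := lead_spec nz.
  apply/eqP; rewrite mcoeff_eq0; apply/negP => tz.
  have ne : t != lead z by apply: contraTneq rt => ->; exact: r_irr.
  by have := r_trans (L2 t tz ne) rt; rewrite (negbTE (r_irr _)).
have zg0 : z@_g != 0 by rewrite gt_eqF.
rewrite (lead_charac zg0 H); split => //.
by apply: contraNneq zg0 => ->; rewrite mcoeff0.
Qed.

Lemma pos_neq0 z : pos z -> z != 0.
Proof. by case/andP. Qed.

Lemma pos0 : pos 0 = false.
Proof. by rewrite /pos eqxx. Qed.

Lemma pos_add a b : pos a -> pos b -> pos (a + b).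
Proof.
move=> /posP[ga [pa Ha]] /posP[gb [pb Hb]]; apply/posP.
have [e|ne] := eqVneq ga gb.
  subst gb; exists ga; split; first by rewrite mcoeffD addr_gt0.
  by move=> t rt; rewrite mcoeffD Ha ?Hb ?addr0.
case/orP: (r_tot ne) => rab.
  exists ga; split; first by rewrite mcoeffD (Hb _ rab) addr0.
  by move=> t rt; rewrite mcoeffD Ha // Hb ?addr0 //; apply: r_trans rt rab.
exists gb; split; first by rewrite mcoeffD (Ha _ rab) add0r.
by move=> t rt; rewrite mcoeffD Hb // Ha ?addr0 //; apply: r_trans rt rab.
Qed.

Lemma pos_scale (c : C) z : 0 < c -> pos z -> pos (c *: z).
Proof.
move=> c0 /posP[g [pg H]]; apply/posP; exists g; split.
  by rewrite mcoeffZ mulr_gt0.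
by move=> t rt; rewrite mcoeffZ H ?mulr0.
Qed.

Lemma pos_tot z : z != 0 -> pos z || pos (- z).
Proof.
move=> nz; have [L1 L2] := lead_spec nz.
have l0 : z@_(lead z) != 0 by rewrite mcoeff_neq0.
have [lt0|gt0] := ltP 0 (z@_(lead z)).
  by rewrite /pos nz lt0.
apply/orP; right; apply/posP; exists (lead z); split.
  by rewrite mcoeffN oppr_gt0 lt_neqAle l0 gt0.
move=> t rt; rewrite mcoeffN; apply/eqP; rewrite oppr_eq0 mcoeff_eq0.
apply/negP => tz.
have ne : t != lead z by apply: contraTneq rt => ->; exact: r_irr.
by have := r_trans (L2 t tz ne) rt; rewrite (negbTE (r_irr _)).
Qed.

Lemma pos_anti z : pos z -> pos (- z) -> False.
Proof.
move=> pz pnz; have := pos_add pz pnz; by rewrite subrr pos0.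
Qed.

Definition ltr (x y : {malg C[T]}) := pos (y - x).

Lemma ltr_ordered : ordered_vspace ltr.
Proof.
split.
- by move=> x; rewrite /ltr subrr pos0.
- move=> x y z; rewrite /ltr => h1 h2.
  by have := pos_add h2 h1; rewrite addrA subrK.
- move=> x y; have [->|ne] := eqVneq x y; first by apply/or3P; constructor 2.
  have : y - x != 0 by rewrite subr_eq0 eq_sym.
  by move/pos_tot; rewrite /ltr opprB => /orP[->|->]; rewrite ?orbT.
- by move=> x y z; rewrite /ltr addrAC opprD addrA subrK.
- by move=> c x y c0; rewrite /ltr -scalerBr => /(pos_scale c0).
Qed.
End Lex.

Lemma addKr2 (V : zmodType) (a b c : V) : (a + c) - (b + c) = a - b.
Proof. by rewrite opprD addrACA subrr addr0. Qed.

Section Model.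
Variable C : realFieldType.
Local Notation T := (GenTree.tree C).
Local Notation K := {malg C[T]}.

Fixpoint height (t : T) : nat := match t with
 | GenTree.Leaf _ => 0
 | GenTree.Node _ l => (foldr maxn 0 (map height l)).+1 end.

Definition fsum (u : nat + C) : nat * C :=
  match u with inl n => (n.+1, 0) | inr c => (0%N, c) end.
Definition key (t : T) : nat * seq (nat * C) :=
  (height t, map fsum (GenTree.encode t)).
Definition ltT (x y : T) := (key x < key y)%O.

Lemma fsum_inj : injective fsum.
Proof. by case=> [m|a] [n|b] //= [] => [->|->]. Qed.

Lemma key_inj : injective key.
Proof.
move=> x y [_ /(inj_map fsum_inj) e].
by have := GenTree.codeK C x; rewrite e GenTree.codeK => -[].
Qed.

Lemma ltT_irr x : ~~ ltT x x.
Proof. by rewrite /ltT ltxx. Qed.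
Lemma ltT_trans x y z : ltT x y -> ltT y z -> ltT x z.
Proof. exact: lt_trans. Qed.
Lemma ltT_tot x y : x != y -> ltT x y || ltT y x.
Proof. by move=> ne; rewrite /ltT lt_total // (inj_eq key_inj). Qed.

Lemma ltT_height x y : (height x < height y)%N -> ltT x y.
Proof.
move=> h; rewrite /ltT /key ltEprodlexi /=.
have h1 : (height x <= height y)%O by exact: ltnW.
have h2 : (height y <= height x)%O = false by apply/negbTE; rewrite -ltnNge.
by rewrite h1 h2.
Qed.

Lemma ltT_leaf (a b : C) : ltT (GenTree.Leaf a) (GenTree.Leaf b) = (a < b).
Proof.
rewrite /ltT /key /= ltEprodlexi /=.
rewrite ltxi_cons ltxx implybF -ltNge andb_idl; last exact: ltW.
by rewrite ltEprodlexi /=.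
Qed.

Definition entry (u : T) : K := match u with
 | GenTree.Node _ [:: t; GenTree.Leaf c] => << c *g t >>
 | _ => 0 end.
Definition dec (j : T) : K := match j with
 | GenTree.Node _ l => \sum_(u <- l) entry u
 | GenTree.Leaf _ => 0 end.

Lemma height_in u l : u \in l -> (height u <= foldr maxn 0 (map height l))%N.
Proof.
elim: l => //= a l IH; rewrite inE => /orP[/eqP->|/IH h]; first exact: leq_maxl.
exact: leq_trans h (leq_maxr _ _).
Qed.

Lemma dec_coef j t : (dec j)@_t != 0 -> (height t < height j)%N.
Proof.
case: j => [x|n l] /=; first by rewrite mcoeff0 eqxx.
move=> H.
have : has (fun u => (entry u)@_t != 0) l.
  apply: contraNT H => /hasPn h; rewrite raddf_sum big1_seq //= => u ul.
  by apply/eqP; rewrite -[_ == 0]negbK; exact: h.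
case/hasP => u ul; move: (height_in ul); case: u ul => [x|m [|t' [|[c|m' s'] [|w s'']]]] ul //=;
  rewrite ?mcoeff0 ?eqxx // mcoeffU.
case: (eqVneq t' t) => [<-|ne]; last by rewrite mulr0n eqxx.
move=> hh _; apply: leq_trans (leq_trans _ hh) (leqnSn _); rewrite ltnS; exact: leq_maxl.
Qed.

Definition psi (x : K) : K := \sum_(j <- msupp x) x@_j *: dec j.
Definition phi_def (x : K) : K := x + psi x.
Fact phi_key : unit. Proof. exact: tt. Qed.
Definition phi := locked_with phi_key phi_def.
Lemma phiE x : phi x = x + psi x.
Proof. by rewrite /phi unlock. Qed.

Lemma psiE (d : {fset T}) x : (msupp x `<=` d)%fset ->
  psi x = \sum_(j <- d) x@_j *: dec j.
Proof.
by move=> sub; apply: big_fset_incl => // j _ jx; rewrite mcoeff_outdom // scale0r.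
Qed.

Lemma psiD x y : psi (x + y) = psi x + psi y.
Proof.
rewrite (@psiE (msupp x `|` msupp y)%fset) ?msuppD_le //.
rewrite (@psiE (msupp x `|` msupp y)%fset x) ?fsubsetUl //.
rewrite (@psiE (msupp x `|` msupp y)%fset y) ?fsubsetUr //.
by rewrite -big_split; apply: eq_bigr => j _; rewrite mcoeffD scalerDl.
Qed.

Lemma psiZ c x : psi (c *: x) = c *: psi x.
Proof.
rewrite (@psiE (msupp x)) ?msuppZ_le // /psi scaler_sumr.
by apply: eq_bigr => j _; rewrite mcoeffZ scalerA.
Qed.

Lemma phiD x y : phi (x + y) = phi x + phi y.
Proof. by rewrite !phiE psiD addrACA. Qed.
Lemma phiZ c x : phi (c *: x) = c *: phi x.
Proof. by rewrite !phiE psiZ scalerDr. Qed.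
Lemma phiN x : phi (- x) = - phi x.
Proof. by rewrite -scaleN1r phiZ scaleN1r. Qed.
Lemma phiB x y : phi (x - y) = phi x - phi y.
Proof. by rewrite phiD phiN. Qed.
Lemma phi0 : phi 0 = 0.
Proof. by rewrite phiE /psi msupp0 big_seq_fset0 addr0. Qed.

Lemma phiU j : phi << j >> = << j >> + dec j.
Proof.
rewrite phiE (@psiE (fset1 j)); last exact: msuppU_le.
by rewrite big_seq_fset1 mcoeffUU scale1r.
Qed.

Definition t0 : T := GenTree.Leaf 0.
Definition gtT (a b : T) := ltT b a.

Lemma sto_ltT : sto ltT.
Proof. split; [exact: ltT_irr| exact: ltT_trans| exact: ltT_tot]. Qed.
Lemma sto_gtT : sto gtT.
Proof.
split; [exact: ltT_irr| by move=> x y z h1 h2; exact: ltT_trans h2 h1|].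
by move=> x y ne; rewrite /gtT orbC; apply: ltT_tot.
Qed.

Lemma phi_neq0 x : x != 0 -> phi x != 0.
Proof.
move=> nz.
have [L1 L2] := lead_spec t0 sto_gtT nz.
set m := lead gtT t0 x in L1 L2.
suff : (phi x)@_m = x@_m by move=> e; apply: contraTneq L1 => e0; rewrite -mcoeff_eq0 -e e0 mcoeff0.
rewrite phiE mcoeffD /psi raddf_sum /= big1_seq ?addr0 // => j jx.
rewrite mcoeffZ; apply/eqP; rewrite mulf_eq0; apply/orP; right.
apply/negPn/negP => /dec_coef /ltT_height mj.
have ne : j != m by apply: contraTneq mj => ->; exact: ltT_irr.
by have := ltT_trans (L2 j jx ne) mj; rewrite (negbTE (ltT_irr _)).
Qed.

Definition posT := @pos C _ ltT t0.
Definition lt0 (x y : K) := posT (phi y - phi x).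

Lemma lt0_irr x : ~~ lt0 x x.
Proof. by rewrite /lt0 subrr /posT pos0. Qed.
Lemma lt0_trans x y z : lt0 x y -> lt0 y z -> lt0 x z.
Proof.
rewrite /lt0 => h1 h2; have := pos_add sto_ltT h2 h1.
by rewrite addrA subrK.
Qed.
Lemma lt0_tot x y : [|| lt0 x y, x == y | lt0 y x].
Proof.
have [->|ne] := eqVneq x y; first by apply/or3P; constructor 2.
have : phi y - phi x != 0 by rewrite -phiB phi_neq0 // subr_eq0 eq_sym.
move/(pos_tot t0 sto_ltT); rewrite opprB => /orP[h|h]; apply/or3P.
  by constructor 1.
by constructor 3.
Qed.
Lemma lt0_add x y z : lt0 x y -> lt0 (x + z) (y + z).
Proof. by rewrite /lt0 !phiD addKr2. Qed.
Lemma lt0_scale (c : C) x y : 0 < c -> lt0 x y -> lt0 (c *: x) (c *: y).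
Proof. by move=> c0; rewrite /lt0 !phiZ -scalerBr => /(pos_scale sto_ltT c0). Qed.

Lemma lt0_ordered : ordered_vspace lt0.
Proof.
split; [exact: lt0_irr | exact: lt0_trans | exact: lt0_tot | exact: lt0_add | exact: lt0_scale].
Qed.

Definition prec (j j' : T) := lt0 << j >> << j' >>.

Lemma U_inj (j j' : T) : (<< j >> : K) = << j' >> -> j = j'.
Proof.
move/(congr1 (mcoeff j)); rewrite !mcoeffU eqxx.
by case: eqVneq => // _ /eqP; rewrite mulr0n oner_eq0.
Qed.

Lemma sto_prec : sto prec.
Proof.
split; [by move=> x; exact: lt0_irr | by move=> x y z; exact: lt0_trans |].
move=> x y ne; have := lt0_tot << x >> << y >>.
case/or3P => [h|/eqP/U_inj e|h]; first by rewrite /prec h.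
  by rewrite e eqxx in ne.
by rewrite /prec h orbT.
Qed.

Lemma prec_irr j : ~~ prec j j.
Proof. exact: lt0_irr. Qed.
Lemma prec_trans a b c : prec a b -> prec b c -> prec a c.
Proof. exact: lt0_trans. Qed.

Definition lt1 := @ltr C _ prec t0.
Definition lead1 := @lead C _ prec t0.
Definition v (x : K) : option K := if x == 0 then None else Some << lead1 x >>.

Lemma lead_min z t : z != 0 -> prec t (lead1 z) -> z@_t = 0.
Proof.
move=> nz pt; have [L1 L2] := lead_spec t0 sto_prec nz.
apply/eqP; rewrite mcoeff_eq0; apply/negP => tz.
have ne : t != lead1 z by apply: contraTneq pt => ->; exact: prec_irr.
by have := prec_trans (L2 t tz ne) pt; rewrite (negbTE (prec_irr _)).
Qed.

Lemma lead1U j : lead1 << j >> = j.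
Proof.
apply: (lead_charac t0 sto_prec); first by rewrite mcoeffUU oner_eq0.
move=> t pt; rewrite mcoeffU; case: eqVneq => [e|]; last by rewrite mulr0n.
by move: pt; rewrite e (negbTE (prec_irr _)).
Qed.

Lemma U_neq0 j : (<< j >> : K) != 0.
Proof. by rewrite monalgU_eq0 oner_eq0. Qed.

Lemma posU j : @pos C _ prec t0 << j >>.
Proof.
apply/(posP t0 sto_prec); exists j; split; first by rewrite mcoeffUU ltr01.
move=> t pt; rewrite mcoeffU; case: eqVneq => [e|]; last by rewrite mulr0n.
by move: pt; rewrite e (negbTE (prec_irr _)).
Qed.

Lemma leinf_None (lt : rel K) a : leinf lt a None.
Proof. by case: a. Qed.

Lemma leinf_trans a b c : leinf lt0 a b -> leinf lt0 b c -> leinf lt0 a c.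
Proof.
rewrite /leinf; case/orP => [h1|/eqP->] //; case/orP => [h2|/eqP<-]; last by rewrite h1.
apply/orP; left; move: h1 h2; case: a => [a|] //; case: b => [b|] //; case: c => [c|] //=.
exact: lt0_trans.
Qed.

Lemma ltinf_tot a b : [|| ltinf lt0 a b, a == b | ltinf lt0 b a].
Proof.
case: a => [a|]; case: b => [b|] //=; rewrite ?orbT //.
by case/or3P: (lt0_tot a b) => [->|/eqP->|->]; rewrite ?eqxx ?orbT.
Qed.

Lemma min_le_l a b : leinf lt0 (mininf lt0 a b) a.
Proof.
rewrite /mininf /leinf; case: ifP => h; first by rewrite eqxx orbT.
by case/or3P: (ltinf_tot a b) => [|/eqP->|->]; rewrite ?h ?eqxx ?orbT.
Qed.

Lemma min_le_r a b : leinf lt0 (mininf lt0 a b) b.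
Proof.
by rewrite /mininf /leinf; case: ifP => h; rewrite ?h ?eqxx ?orbT.
Qed.

Lemma v_le x t : t \in msupp x -> leinf lt0 (v x) (Some << t >>).
Proof.
move=> tx; have nx : x != 0 by apply: contraTneq tx => ->; rewrite msupp0.
have [L1 L2] := lead_spec t0 sto_prec nx.
rewrite /v (negbTE nx) /leinf; case: (eqVneq t (lead1 x)) => [->|ne].
  by rewrite eqxx orbT.
by apply/orP; left; exact: (L2 t tx ne).
Qed.

Lemma v_None x : v x = None <-> x = 0.
Proof. by rewrite /v; case: eqP => [->|ne]; split. Qed.

Lemma v_ultra x y : leinf lt0 (mininf lt0 (v x) (v y)) (v (x + y)).
Proof.
have [e|nz] := eqVneq (x + y) 0; first by rewrite /v e eqxx leinf_None.
have [L1 L2] := lead_spec t0 sto_prec nz.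
have : lead1 (x + y) \in (msupp x `|` msupp y)%fset by apply: (fsubsetP (msuppD_le x y)).
rewrite /v (negbTE nz) in_fsetU => /orP[/v_le h|/v_le h].
  exact: leinf_trans (min_le_l _ _) h.
exact: leinf_trans (min_le_r _ _) h.
Qed.

Lemma v_scale (c : C) x : c != 0 -> v (c *: x) = v x.
Proof.
move=> c0; rewrite /v scaler_eq0 (negbTE c0) /=.
by rewrite /lead1 /lead msuppZ (negbTE c0).
Qed.

Lemma v_mono x y : lt1 0 x -> lt1 x y -> leinf lt0 (v y) (v x).
Proof.
rewrite /lt1 /ltr subr0 => px pyx.
have py : @pos C _ prec t0 y by have := pos_add sto_prec pyx px; rewrite subrK.
have nx := pos_neq0 px; have ny := pos_neq0 py.
rewrite /v (negbTE nx) (negbTE ny) /leinf /=.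
case: (eqVneq (lead1 y) (lead1 x)) => [->|ne]; first by rewrite eqxx orbT.
case: sto_prec => _ _ tot; case/orP: (tot _ _ ne) => [h|pab]; first by apply/orP; left; exact: h.
exfalso.
have xa : 0 < x@_(lead1 x) by case/andP: px.
have ya : y@_(lead1 x) = 0 by apply: lead_min.
case/(posP t0 sto_prec): pyx => g [pg Hg].
case: (eqVneq g (lead1 x)) => [eg|neg].
  by move: pg; rewrite eg mcoeffB ya sub0r oppr_gt0 ltNge ltW.
case/orP: (tot _ _ neg) => h.
  move: pg; rewrite mcoeffB (lead_min nx h) subr0.
  by rewrite (lead_min ny (prec_trans h pab)) ltxx.
have := Hg _ h; rewrite mcoeffB ya sub0r => /eqP; rewrite oppr_eq0 => /eqP e.
by move: xa; rewrite e ltxx.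
Qed.

Lemma v_idem x : vinf v (v x) = v x.
Proof.
rewrite /v; case: eqP => // _ /=.
by rewrite (negbTE (U_neq0 _)) lead1U.
Qed.

Lemma v_pos x : ltinf lt1 (Some 0) (v x).
Proof.
rewrite /v; case: eqP => // _ /=.
by rewrite /lt1 /ltr subr0 posU.
Qed.

Lemma hamel_v : hamel_valuation lt0 lt1 v.
Proof.
split; [exact: v_None|split; [exact: v_ultra|split; [exact: v_scale|split; [exact: v_mono|split; [exact: v_idem|exact: v_pos]]]]].
Qed.

Lemma posT_U : posT << t0 >>.
Proof.
apply/(posP t0 sto_ltT); exists t0; split; first by rewrite mcoeffUU ltr01.
move=> t pt; rewrite mcoeffU; case: eqVneq => [e|]; last by rewrite mulr0n.
by move: pt; rewrite e (negbTE (ltT_irr _)).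
Qed.

Lemma K_dense (a b : K) : posT (b - a) ->
  exists j, posT (phi << j >> - a) && posT (b - phi << j >>).
Proof.
case/(posP t0 sto_ltT) => g [dg Hg].
pose mid := (a@_g + b@_g) / 2.
pose s : K := [malg t in (msupp a `|` [fset g])%fset =>
   if t == g then mid else if ltT t g then a@_t else 0].
pose j := GenTree.Node 0 (GenTree.Node 0 [:: g] ::
   map (fun t => GenTree.Node 0 [:: t; GenTree.Leaf (s@_t)]) (msupp s)).
have dj : dec j = s.
  rewrite /= big_cons /entry /= add0r big_map [RHS]monalgE; exact: eq_bigr.
have hj : ltT g j.
  apply: ltT_height => /=; rewrite ltnS; apply: (leq_trans _ (leq_maxl _ _)).
  by rewrite maxn0.
have sc t : s@_t = if t == g then mid else if ltT t g then a@_t else 0.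
  rewrite mcoeffE in_fsetU in_fset1; case: eqVneq => [_|_]; first by rewrite orbT.
  rewrite orbF; case E: (_ \in _); first by [].
  by case: ifP => // _; rewrite mcoeff_outdom // E.
have jg : j != g by apply: contraTneq hj => ->; exact: ltT_irr.
have jt t : ltT t g -> j != t.
  by move=> h; apply: contraTneq (ltT_trans h hj) => ->; exact: ltT_irr.
exists j; rewrite phiU dj; apply/andP; split; apply/(posP t0 sto_ltT); exists g; split.
- rewrite !(mcoeffB, mcoeffD) mcoeffU (negbTE jg) mulr0n add0r sc eqxx /mid.
  move: dg; rewrite mcoeffB => dg; lra.
- move=> t h; have tg : t != g by apply: contraTneq h => ->; exact: ltT_irr.
  rewrite !(mcoeffB, mcoeffD) mcoeffU (negbTE (jt t h)) mulr0n add0r sc.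
  by rewrite (negbTE tg) h subrr.
- rewrite !(mcoeffB, mcoeffD) mcoeffU (negbTE jg) mulr0n add0r sc eqxx /mid.
  move: dg; rewrite mcoeffB => dg; lra.
- move=> t h; have tg : t != g by apply: contraTneq h => ->; exact: ltT_irr.
  rewrite !(mcoeffB, mcoeffD) mcoeffU (negbTE (jt t h)) mulr0n add0r sc.
  by rewrite (negbTE tg) h -mcoeffB; apply: Hg.
Qed.

Lemma dense0 : dense lt0 v.
Proof.
move=> a b h; have [j /andP[h1 h2]] := K_dense h.
exists << j >>; rewrite /v (negbTE (U_neq0 j)) lead1U /=.
by apply/andP; split.
Qed.

Definition above (j0 : T) (w : K) := forall t, (t == j0) || prec t j0 -> w@_t = 0.

Lemma above_self j w : above j w -> w@_j = 0.
Proof. by move=> h; apply: h; rewrite eqxx. Qed.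
Lemma above_prec j w t : above j w -> prec t j -> w@_t = 0.
Proof. by move=> h pt; apply: h; rewrite pt orbT. Qed.

Lemma stepA (a1 b1 : ext K) : ltext lt1 a1 b1 -> exists m j0,
  forall w, above j0 w -> ltext lt1 a1 (Fin (m + w)) && ltext lt1 (Fin (m + w)) b1.
Proof.
have ne0 t : prec t t0 -> (<< t0 >> : K)@_t = 0.
  move=> h; rewrite mcoeffU; case: eqVneq => [e|]; last by rewrite mulr0n.
  by move: h; rewrite e (negbTE (prec_irr _)).
case: a1 => [|a|]; case: b1 => [|b|] //= h.
- exists (b - << t0 >>), t0 => w hw /=.
  apply/(posP t0 sto_prec); exists t0; split.
    rewrite !(mcoeffB, mcoeffD) mcoeffUU (above_self hw).
    lra.
  move=> t pt; rewrite !(mcoeffB, mcoeffD) (above_prec hw pt) (ne0 t pt).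
  lra.
- by exists 0, t0.
- case/(posP t0 sto_prec): h => g [dg Hg].
  exists (a + 2^-1 *: (b - a)), g => w hw /=; apply/andP; split;
    apply/(posP t0 sto_prec); exists g; split.
  + rewrite !(mcoeffB, mcoeffD, mcoeffZ) (above_self hw).
    move: dg; rewrite mcoeffB => dg; lra.
  + move=> t pt; have := Hg t pt.
    rewrite !(mcoeffB, mcoeffD, mcoeffZ) (above_prec hw pt) => e.
    lra.
  + rewrite !(mcoeffB, mcoeffD, mcoeffZ) (above_self hw).
    move: dg; rewrite mcoeffB => dg; lra.
  + move=> t pt; have := Hg t pt.
    rewrite !(mcoeffB, mcoeffD, mcoeffZ) (above_prec hw pt) => e.
    lra.
- exists (a + << t0 >>), t0 => w hw /=; rewrite andbT.
  apply/(posP t0 sto_prec); exists t0; split.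
    rewrite !(mcoeffB, mcoeffD) mcoeffUU (above_self hw).
    lra.
  move=> t pt; rewrite !(mcoeffB, mcoeffD) (above_prec hw pt) (ne0 t pt).
  lra.
Qed.

Lemma lt0_addl x y z : lt0 y z -> lt0 (x + y) (x + z).
Proof. by move=> h; rewrite ![x + _]addrC; apply: lt0_add. Qed.
Lemma lt0_subl x y z : lt0 (x + y) z -> lt0 y (z - x).
Proof. by move=> /(lt0_add (- x)); rewrite addrAC subrr add0r. Qed.
Lemma lt0_subr x y z : lt0 z (x + y) -> lt0 (z - x) y.
Proof. by move=> /(lt0_add (- x)); rewrite addrAC subrr add0r. Qed.

Definition le0 x y := lt0 x y || (x == y).
Lemma le_lt0 x y z : le0 x y -> lt0 y z -> lt0 x z.
Proof. by case/orP => [h1 h2|/eqP->//]; apply: lt0_trans h1 h2. Qed.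

Lemma lt0_q : lt0 0 << t0 >>.
Proof.
rewrite /lt0 phi0 subr0 phiU /= addr0; exact: posT_U.
Qed.

Lemma dense0' (a b : K) : lt0 a b -> exists j, lt0 a << j >> && lt0 << j >> b.
Proof.
move=> h; have [j /andP[h1 h2]] := K_dense h.
by exists j; apply/andP; split.
Qed.

Lemma stepB j0 (l u : K) : lt0 l u -> exists w, [/\ above j0 w, lt0 l w & lt0 w u].
Proof.
move=> hlu.
pose e : K := << j0 >>.
pose M := if lt0 0 l then e else e - l.
have [hM hMl] : le0 e M /\ le0 e (M + l).
  rewrite /M; case: ifP => h.
    split; first by rewrite /le0 eqxx orbT.
    by apply/orP; left; have := lt0_addl e h; rewrite addr0.
  split; last by rewrite subrK /le0 eqxx orbT.
  case/or3P: (lt0_tot 0 l) => [|/eqP<-|hl]; first by rewrite h.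
    by rewrite subr0 /le0 eqxx orbT.
  apply/orP; left; have := lt0_addl (e - l) hl.
  by rewrite addr0 subrK.
have [j1 /andP[h11 h12]] := dense0' (lt0_addl M lt0_q).
rewrite addr0 in h11.
have [j2 /andP[h21 h22]] := dense0' (lt0_addl << j1 >> hlu).
have p1 : prec j0 j1 by apply: le_lt0 hM h11.
have p2 : prec j0 j2.
  apply: le_lt0 hMl _; apply: lt0_trans h21.
  by rewrite ![_ + l]addrC; apply: lt0_addl.
have nej j t : prec j0 j -> (t == j0) || prec t j0 -> j != t.
  move=> pj /orP[/eqP->|pt].
    by apply: contraTneq pj => ->; exact: prec_irr.
  by apply: contraTneq (prec_trans pt pj) => ->; exact: prec_irr.
exists (<< j2 >> - << j1 >>); split.
- move=> t ht; rewrite mcoeffB !mcoeffU (negbTE (nej _ _ p1 ht)) (negbTE (nej _ _ p2 ht)).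
  by rewrite subrr.
- exact: lt0_subl h21.
- exact: lt0_subr h22.
Qed.

Lemma stepC (a0 b0 : ext K) m : ltext lt0 a0 b0 -> exists l u, lt0 l u /\ forall w, lt0 l w -> lt0 w u -> ltext lt0 a0 (Fin (m + w)) && ltext lt0 (Fin (m + w)) b0.
Proof.
have fin1 a w : lt0 (a - m) w -> lt0 a (m + w).
  by move/(lt0_addl m); rewrite addrC subrK.
have fin2 b w : lt0 w (b - m) -> lt0 (m + w) b.
  by move/(lt0_addl m); rewrite [m + (b - m)]addrC subrK.
have qd x : lt0 (x - << t0 >>) x.
  by have := lt0_addl (x - << t0 >>) lt0_q; rewrite addr0 subrK.
have qu x : lt0 x (x + << t0 >>).
  by have := lt0_addl x lt0_q; rewrite addr0.
case: a0 => [|a|]; case: b0 => [|b|] //= h.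
- exists (b - m - << t0 >>), (b - m); split=> // w _ h2 /=; exact: fin2.
- by exists 0, << t0 >>; split=> //; exact: lt0_q.
- exists (a - m), (b - m); split; first by apply: lt0_add.
  by move=> w h1 h2; rewrite fin1 ?fin2.
- exists (a - m), (a - m + << t0 >>); split=> // w h1 _; rewrite andbT; exact: fin1.
Qed.

Lemma indep0 : independent lt0 lt1.
Proof.
move=> a0 b0 a1 b1 h0 h1.
have [m [j0 Hm]] := stepA h1.
have [l [u [hlu Hlu]]] := stepC m h0.
have [w [hw h1w h2w]] := stepB j0 hlu.
exists (m + w).
case/andP: (Hm w hw) => c1 c2; case/andP: (Hlu w h1w h2w) => c3 c4.
by split.
Qed.

Lemma model : indep_dense_hamel lt0 lt1 v.
Proof.
split; [split; [split; [exact: lt0_ordered| exact: (ltr_ordered C t0 sto_prec)] | exact: hamel_v] | exact: indep0 | exact: dense0].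
Qed.

Lemma prec_leaf (c c' : C) : c' < c -> prec (GenTree.Leaf c) (GenTree.Leaf c').
Proof.
move=> h; rewrite /prec /lt0 !phiU /= !addr0.
have l1 : ltT (GenTree.Leaf c') (GenTree.Leaf c) by rewrite ltT_leaf.
have ne : GenTree.Leaf c != GenTree.Leaf c' :> T.
  by apply: contraTneq l1 => ->; exact: ltT_irr.
apply/(posP t0 sto_ltT); exists (GenTree.Leaf c'); split.
  by rewrite mcoeffB !mcoeffU eqxx (negbTE ne) mulr0n subr0 ltr01.
move=> t ht; rewrite mcoeffB !mcoeffU.
have n1 : GenTree.Leaf c' != t by apply: contraTneq ht => ->; exact: ltT_irr.
have n2 : GenTree.Leaf c != t.
  by apply: contraTneq (ltT_trans ht l1) => ->; exact: ltT_irr.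
by rewrite (negbTE n1) (negbTE n2) subrr.
Qed.

Definition cc (i j : nat) : C := - (i%:R) - (j.+2)%:R^-1.
Definition gg (i j : nat) : T := GenTree.Leaf (cc i j).

Lemma inv_bounds (j : nat) : 0 < (j.+2)%:R^-1 :> C /\ (j.+2)%:R^-1 < 1 :> C.
Proof.
split; first by rewrite invr_gt0 ltr0n.
by rewrite invf_lt1 ?ltr0n // ltr1n.
Qed.

Lemma helper_ineq (i k : nat) (x y : C) : 0 < y -> x < 1 ->
  i%:R + 1 <= k%:R :> C -> - k%:R - y < - i%:R - x.
Proof. move=> hy hx hk; lra. Qed.

Lemma prec_gg i k x y : (i < k)%N -> prec (gg i x) (gg k y).
Proof.
move=> ik; apply: prec_leaf; rewrite /cc.
have [hx1 hx2] := inv_bounds x; have [hy1 hy2] := inv_bounds y.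
have : (i.+1)%:R <= k%:R :> C by rewrite ler_nat.
rewrite -natr1 => hk; exact: helper_ineq.
Qed.

Lemma gg_inj i x y : gg i x = gg i y -> x = y.
Proof.
case=> /eqP; rewrite /cc (inj_eq (addrI _)) (inj_eq oppr_inj) (inj_eq (@invr_inj _)).
by rewrite eqr_nat => /eqP [].
Qed.

Fixpoint rt (i : nat) : term C := match i with
  | 0 => TVar C 0
  | i'.+1 => TAdd (rt i') (TScal (-1) (TVal (rt i'))) end.

Definition phiF (i : nat) : formula C := FEq (TVal (rt i)) (TVar C 1).
Definition aa (i j : nat) : env K := fun _ => Some (<< gg i j >> : K).

Section Pattern.
Variables (eta : nat -> nat) (N : nat).
Definition RR (i : nat) : K := \sum_(i <= k < N) << gg k (eta k) >>.

Lemma RR_coef0 i t : (forall k, (i <= k < N)%N -> gg k (eta k) != t) -> (RR i)@_t = 0.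
Proof.
move=> H; rewrite /RR raddf_sum big1_seq // => k; rewrite mem_index_iota /= => hk.
by rewrite mcoeffU (negbTE (H k hk)) mulr0n.
Qed.

Lemma RR_S i : (i < N)%N -> RR i = << gg i (eta i) >> + RR i.+1.
Proof. by move=> h; rewrite /RR big_ltn. Qed.

Lemma v_RR i : (i < N)%N -> v (RR i) = Some << gg i (eta i) >>.
Proof.
move=> iN.
have c1 : (RR i)@_(gg i (eta i)) = 1.
  rewrite RR_S // mcoeffD mcoeffUU RR_coef0 ?addr0 // => k /andP[ik _].
  apply: contraTneq (prec_gg (eta i) (eta k) ik) => ->; exact: prec_irr.
have nz : RR i != 0 by apply: contra_eq_neq c1 => ->; rewrite mcoeff0 eq_sym oner_neq0.
rewrite /v (negbTE nz); congr (Some << _ >>).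
apply: (lead_charac t0 sto_prec); first by rewrite c1 oner_neq0.
move=> t pt; apply: RR_coef0 => k /andP[ik kN].
rewrite leq_eqVlt in ik; case/orP: ik => [/eqP <-|ik].
  by apply: contraTneq pt => ->; exact: prec_irr.
by apply: contraTneq (prec_gg (eta i) (eta k) ik) => ->; apply/negP => h;
  have := prec_trans h pt; rewrite (negbTE (prec_irr _)).
Qed.

Definition bb : env K := fun _ => Some (RR 0).

Lemma teval_rt p i : (i <= N)%N -> teval v (combine 1 bb p) (rt i) = Some (RR i).
Proof.
elim: i => [|i IH] hi //=.
rewrite IH ?(ltnW hi) //= v_RR //= (RR_S hi) scaleN1r.
by rewrite addrAC subrr add0r.
Qed.
End Pattern.

Lemma ict_all rows : THam_has_ict C 1 rows.
Proof.
exists (K : lmodType C), lt0, lt1, v; split; first exact: model.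
exists phiF, aa => eta N; exists (bb eta N) => i iN _.
have e1 p : vinf v (teval v (combine 1 (bb eta N) p) (rt i)) = Some << gg i (eta i) >>.
  by rewrite teval_rt ?(ltnW iN) //= v_RR.
split.
  by rewrite /= e1.
move=> j jN ne; rewrite /= e1 /combine /= /aa => /(congr1 (odflt 0)) /= eU.
by apply: ne; symmetry; exact: (gg_inj (U_inj eU)).
Qed.

Lemma not_sd : ~ THam_strongly_dependent C.
Proof. by move=> H; apply: (H 1%N); exact: ict_all. Qed.
Lemma not_dpmin : ~ THam_dp_minimal C.
Proof. by apply; exact: ict_all. Qed.
Lemma not_fdp : ~ THam_finite_dp_rank C.
Proof. by case=> k; apply; exact: ict_all. Qed.
End Model.

Theorem theorem7p1 (C : realFieldType) :
  ~ THam_strongly_dependent C /\ ~ THam_dp_minimal C /\ ~ THam_finite_dp_rank C.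
Proof.
split; [exact: not_sd | split; [exact: not_dpmin | exact: not_fdp]].
Qed.
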